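(* Let $R=\mathbb{Z}[A^{\pm1}]$. Let $G_0\subseteq G_1\subseteq G_2\subseteq\cdots$ be sets with $G_\infty=\bigcup_{i\ge0}G_i$, and let $\mathcal{G}_n$ and $\mathcal{G}_\infty$ be the free $R$-modules with bases $G_n$ and $G_\infty$ (so $\mathcal{G}_n\subseteq\mathcal{G}_\infty$). Let $J_0\subseteq J_1\subseteq\cdots$ be subsets of $\mathcal{G}_\infty$ with $J_\infty=\bigcup_{i\ge0}J_i$, and let $\mathcal{J}_n,\mathcal{J}_\infty$ be the submodules of $\mathcal{G}_\infty$ generated by $J_n,J_\infty$. Suppose: (1) $\mathcal{J}_0\subseteq\mathcal{G}_0$; (2) there is a map $\eta:J_\infty\to G_\infty$ restricting to bijections $J_n\setminus J_{n-1}\to G_n\setminus G_{n-1}$ for all $n\ge1$; (3) for every $n\ge1$ and $r\in J_n\setminus J_{n-1}$ there exist a sign $\epsilon\in\{\pm1\}$, an integer $k$ and $g\in\mathcal{G}_{n-1}$ with $r=\epsilon A^k\eta(r)+g$. Then $\mathcal{G}_\infty/\mathcal{J}_\infty=\mathcal{G}_0/\mathcal{J}_0$, i.e. the natural map $\mathcal{G}_0/\mathcal{J}_0\to\mathcal{G}_\infty/\mathcal{J}_\infty$ is an isomorphism. *)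

(* Defs.v *)
From HB Require Import structures.
From mathcomp Require Import all_boot all_order all_algebra.
Set Implicit Arguments. Unset Strict Implicit. Unset Printing Implicit Defensive.
Import Order.TTheory GRing.Theory Num.Theory.
Local Open Scope ring_scope.

(* (R, A) is (isomorphic to) the Laurent polynomial ring Z[A, A^-1]:
   A is a unit, A is transcendental over Z, and every element is of the
   form q(A) / A^n with q an integer polynomial. *)
Definition is_laurent_ring (R : comUnitRingType) (A : R) : Prop :=
  [/\ A \is a GRing.unit,
      (forall p : {poly int}, (map_poly (fun z : int => z%:~R) p : {poly R}).[A] = 0 -> p = 0)
    & (forall r : R, exists (p : {poly int}) (n : nat),
          r = (map_poly (fun z : int => z%:~R) p : {poly R}).[A] / A ^+ n)].

Definition rspan (R : comUnitRingType) (M : lmodType R) (S : M -> Prop) : M -> Prop :=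
  fun x => exists (n : nat) (c : 'I_n -> R) (v : 'I_n -> M),
      (forall i, S (v i)) /\ x = \sum_(i < n) c i *: v i.

Definition is_basis (R : comUnitRingType) (M : lmodType R) (T : Type) (b : T -> M) : Prop :=
  (forall (n : nat) (t : 'I_n -> T) (c : 'I_n -> R),
      injective t -> \sum_(i < n) c i *: b (t i) = 0 -> forall i, c i = 0)
  /\ (forall x : M, rspan (fun y => exists t, y = b t) x).

Definition basis_span (R : comUnitRingType) (M : lmodType R) (T : Type)
  (b : T -> M) (Gn : T -> Prop) : M -> Prop :=
  rspan (fun y => exists2 t, Gn t & y = b t).

(* Main.v *)
Require Import Defs.
From HB Require Import structures.
From mathcomp Require Import all_boot all_order all_algebra.
From mathcomp Require Import boolp.
Import Order.TTheory GRing.Theory Num.Theory.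
Local Open Scope ring_scope.

Definition lc {R : comUnitRingType} {M : lmodType R} (s : seq (R * M)) : M :=
  \sum_(p <- s) p.1 *: p.2.

Lemma rspan_seq {R : comUnitRingType} {M : lmodType R} (S : M -> Prop) x :
  rspan S x <-> exists s : seq (R * M), (forall p, p \in s -> S p.2) /\ x = lc s.
Proof.
split.
- case=> n [c [v [Sv ->]]].
  exists [seq (c i, v i) | i <- enum 'I_n]; split.
    by move=> p /mapP [i _ ->]; apply: Sv.
  by rewrite /lc big_map big_enum.
- case=> s [Ss ->].
  exists (size s), (fun i => (nth (0,0) s i).1), (fun i => (nth (0,0) s i).2); split.
    by move=> i; apply: Ss; apply: mem_nth.
  by rewrite /lc (big_nth (0,0)) big_mkord.
Qed.

Lemma span_closed {R : comUnitRingType} {M : lmodType R} (S Q : M -> Prop) :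
  Q 0 -> (forall x y, Q x -> Q y -> Q (x + y)) -> (forall a x, Q x -> Q (a *: x)) ->
  (forall x, S x -> Q x) -> forall x, rspan S x -> Q x.
Proof.
move=> Q0 QD QZ SQ x /rspan_seq [s [Ss ->]].
elim: s Ss => [|p s IH] Ss; first by rewrite /lc big_nil.
rewrite /lc big_cons; apply: QD; first by apply/QZ/SQ/Ss; rewrite mem_head.
by apply: IH => q qs; apply: Ss; rewrite in_cons qs orbT.
Qed.

Lemma span0 {R : comUnitRingType} {M : lmodType R} (S : M -> Prop) : rspan S 0.
Proof. by apply (proj2 (rspan_seq _ _)); exists [::]; split => //; rewrite /lc big_nil. Qed.

Lemma spanD {R : comUnitRingType} {M : lmodType R} (S : M -> Prop) x y :
  rspan S x -> rspan S y -> rspan S (x + y).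
Proof.
move=> /rspan_seq [s1 [S1 ->]] /rspan_seq [s2 [S2 ->]].
apply (proj2 (rspan_seq _ _)); exists (s1 ++ s2); split; last by rewrite /lc big_cat.
by move=> p; rewrite mem_cat => /orP [/S1|/S2].
Qed.

Lemma spanZ {R : comUnitRingType} {M : lmodType R} (S : M -> Prop) a x :
  rspan S x -> rspan S (a *: x).
Proof.
move=> /rspan_seq [s [Ss ->]].
apply (proj2 (rspan_seq _ _)); exists [seq (a * p.1, p.2) | p <- s]; split.
  by move=> q /mapP [p ps ->]; apply: (Ss p ps).
rewrite /lc big_map scaler_sumr. apply: eq_bigr => p _. by rewrite scalerA.
Qed.

Lemma span_gen {R : comUnitRingType} {M : lmodType R} (S : M -> Prop) x :
  S x -> rspan S x.
Proof.
move=> Sx; apply (proj2 (rspan_seq _ _)); exists [:: (1, x)]; split.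
  by move=> p; rewrite inE => /eqP ->.
by rewrite /lc big_seq1 scale1r.
Qed.

Lemma spanN {R : comUnitRingType} {M : lmodType R} (S : M -> Prop) x :
  rspan S x -> rspan S (- x).
Proof. by move=> h; rewrite -scaleN1r; apply: spanZ. Qed.

Lemma spanB {R : comUnitRingType} {M : lmodType R} (S : M -> Prop) x y :
  rspan S x -> rspan S y -> rspan S (x - y).
Proof. by move=> hx hy; apply: spanD => //; apply: spanN. Qed.

Lemma span_mono {R : comUnitRingType} {M : lmodType R} (S S' : M -> Prop) :
  (forall x, S x -> rspan S' x) -> forall x, rspan S x -> rspan S' x.
Proof.
move=> h; apply: span_closed => //; [exact: span0 | exact: spanD | exact: spanZ].
Qed.

Lemma lc_span {R : comUnitRingType} {M : lmodType R} (S : M -> Prop) s :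
  (forall p, p \in s -> S p.2) -> rspan S (lc s).
Proof. by move=> h; apply (proj2 (rspan_seq _ _)); exists s. Qed.

Lemma group_sum {R : comUnitRingType} {M : lmodType R} {X : eqType} (f : X -> M)
  (w : seq (R * X)) :
  \sum_(q <- w) q.1 *: f q.2 =
  \sum_(x <- undup (map snd w)) (\sum_(q <- w | q.2 == x) q.1) *: f x.
Proof.
rewrite (eq_bigr (fun x => \sum_(q <- w) (if x == q.2 then q.1 *: f q.2 else 0))); last first.
  move=> x _; rewrite scaler_suml big_mkcond /=; apply: eq_bigr => q _.
  by rewrite eq_sym; case: eqP => [->|].
rewrite exchange_big /=; apply: eq_big_seq => q qw.
have qu : q.2 \in undup (map snd w) by rewrite mem_undup; apply: map_f.
by rewrite -big_mkcond /= -big_filter filter_pred1_uniq ?undup_uniq // big_seq1.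
Qed.
Lemma IND {R : comUnitRingType} {M : lmodType R} {T : eqType} (b : T -> M)
  (w : seq (R * T)) :
  is_basis b -> \sum_(q <- w) q.1 *: b q.2 = 0 ->
  forall t, \sum_(q <- w | q.2 == t) q.1 = 0.
Proof.
move=> [bind _] E t; rewrite group_sum in E.
set u := undup (map snd w) in E.
have uu : uniq u by apply: undup_uniq.
case: (boolP (t \in u)) => tu.
  rewrite (big_nth t) big_mkord in E.
  have inj : injective (fun i : 'I_(size u) => nth t u i).
    move=> i j /eqP; rewrite nth_uniq // => /eqP; apply: val_inj.
  have := bind _ _ _ inj E (Ordinal (etrans (index_mem t u) tu)).
  by rewrite /= nth_index.
apply: big1_seq => q /andP [/eqP qt qw]; case/negP: tu.
by rewrite /u mem_undup -qt; apply: map_f.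
Qed.

Lemma KL {R : comUnitRingType} {M : lmodType R} {T : eqType} (b : T -> M)
  (P : T -> Prop) (w : seq (R * T)) :
  is_basis b -> (forall q, q \in w -> ~ P q.2) ->
  basis_span b P (\sum_(q <- w) q.1 *: b q.2) ->
  forall t, \sum_(q <- w | q.2 == t) q.1 = 0.
Proof.
move=> bas nP /rspan_seq [s2 [S2 E]] t.
have [tau Htau] : {tau : M -> T & forall y,
    (exists2 t', P t' & y = b t') -> P (tau y) /\ y = b (tau y)}.
  apply: (@boolp.choice M T (fun y t0 => (exists2 t', P t' & y = b t') -> P t0 /\ y = b t0)).
  move=> y; case: (pselect (exists2 t', P t' & y = b t')) => [[t' Pt' ->]|nh].
    by exists t'.
  by exists t.
set w2 := [seq (- p.1, tau p.2) | p <- s2].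
have E0 : \sum_(q <- w ++ w2) q.1 *: b q.2 = 0.
  rewrite big_cat E /lc big_map /= -big_split /=.
  apply: big1_seq => p /andP [_ ps].
  by have [_ <-] := Htau _ (S2 p ps); rewrite scaleNr addrN.
have := IND _ _ bas E0 t; rewrite big_cat /=.
case: (pselect (P t)) => Pt.
  move=> _; apply: big1_seq => q /andP [/eqP qt qw].
  by case: (nP q qw); rewrite qt.
suff -> : \sum_(q <- w2 | q.2 == t) q.1 = 0 by rewrite addr0.
apply: big1_seq => q /andP [/eqP qt /mapP [p ps qe]].
by case: Pt; rewrite -qt qe /=; case: (Htau _ (S2 p ps)).
Qed.

Theorem lemma4p4 (R : comUnitRingType) (A : R) (M : lmodType R) (T : Type)
  (b : T -> M) (G : nat -> T -> Prop) (J : nat -> M -> Prop) (eta : M -> T) :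
  is_laurent_ring A ->
  (* M = free module on G_oo = T with basis b, G_oo = union of the G_n *)
  is_basis b ->
  (forall n t, G n t -> G n.+1 t) ->
  (forall t, exists n, G n t) ->
  (* J_0 ⊆ J_1 ⊆ ... ⊆ M *)
  (forall n x, J n x -> J n.+1 x) ->
  (* (1) span J_0 ⊆ span G_0 *)
  (forall x, rspan (J 0%N) x -> basis_span b (G 0%N) x) ->
  (* (2) eta restricts to bijections J_n \ J_(n-1) -> G_n \ G_(n-1), n >= 1 *)
  (forall n, (0 < n)%N ->
     (forall r, J n r -> ~ J n.-1 r -> G n (eta r) /\ ~ G n.-1 (eta r))
     /\ (forall r s, J n r -> ~ J n.-1 r -> J n s -> ~ J n.-1 s -> eta r = eta s -> r = s)
     /\ (forall t, G n t -> ~ G n.-1 t -> exists r, [/\ J n r, ~ J n.-1 r & eta r = t])) ->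
  (* (3) r = eps A^k eta(r) + g with g in the span of G_(n-1) *)
  (forall n, (0 < n)%N -> forall r, J n r -> ~ J n.-1 r ->
     exists (eps : R) (k : int) (g : M),
       [/\ eps = 1 \/ eps = -1, basis_span b (G n.-1) g
         & r = (eps * A ^ k) *: b (eta r) + g]) ->
  (* conclusion: the natural map G_0/J_0 -> G_oo/J_oo is an isomorphism *)
  let Jinf := fun x => exists n, J n x in
  (* surjective *)
  (forall x : M, exists y, basis_span b (G 0%N) y /\ rspan Jinf (x - y))
  /\
  (* injective *)
  (forall y : M, basis_span b (G 0%N) y -> rspan Jinf y -> rspan (J 0%N) y).
Proof.
move=> [uA _ _] bas HG HGall HJ H1 H2 H3 Jinf.
have Gspan_S : forall n x, basis_span b (G n) x -> basis_span b (G n.+1) x.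
  move=> n; apply: span_mono => _ [t Gt ->]; apply: span_gen; exists t => //; exact: HG.
have G0span : forall n x, basis_span b (G 0%N) x -> basis_span b (G n) x.
  by elim=> [//|n IH] x /IH; apply: Gspan_S.
have unitu : forall eps (k : int), eps = 1 \/ eps = -1 -> (eps * A ^ k) \is a GRing.unit.
  move=> eps k [->|->]; rewrite unitrM unitrXz // andbT ?unitr1 //.
  by rewrite unitrN unitr1.
split.
- pose Q z := exists y, basis_span b (G 0%N) y /\ rspan Jinf (z - y).
  have Q0 : Q 0 by exists 0; split; [exact: span0 | rewrite subrr; exact: span0].
  have QD : forall x1 x2, Q x1 -> Q x2 -> Q (x1 + x2).
    move=> x1 x2 [y1 [Y1 D1]] [y2 [Y2 D2]]; exists (y1 + y2); split; first exact: spanD.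
    by rewrite opprD addrACA; apply: spanD.
  have QZ : forall a x1, Q x1 -> Q (a *: x1).
    move=> a x1 [y1 [Y1 D1]]; exists (a *: y1); split; first exact: spanZ.
    by rewrite -scalerBr; apply: spanZ.
  have Qn : forall n x, basis_span b (G n) x -> Q x.
    elim=> [|n IH] x.
      by move=> hx; exists x; split => //; rewrite subrr; apply: span0.
    apply: span_closed => //.
    move=> _ [t Gt ->].
    case: (pselect (G n t)) => Gnt.
      by apply: IH; apply: span_gen; exists t.
    have [r [Jr nJr <-]] := (H2 n.+1 isT).2.2 t Gt Gnt.
    have [eps [k [g [heps hg Er]]]] := H3 n.+1 isT r Jr nJr.
    have [yg [Yg Dg]] := IH g hg.
    move: Er; set u := eps * A ^ k => Er.
    have uu : u \is a GRing.unit by apply: unitu.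
    exists (- (u^-1 *: yg)); split; first by apply/spanN/spanZ.
    have -> : b (eta r) - - (u^-1 *: yg) = u^-1 *: r - u^-1 *: (g - yg).
      rewrite {2}Er scalerDr scalerA mulVr // scale1r scalerBr opprB opprK.
      by rewrite [RHS]addrC addrA addrAC subrK addrC.
    apply: spanB; apply: spanZ => //; apply: span_gen; by exists n.+1.
  move=> x; have := bas.2 x; apply: (span_closed _ Q) => //.
  move=> _ [t ->]; have [n Gn] := HGall t; apply: (Qn n); apply: span_gen; by exists t.
- have Jlev : forall n x, J n x -> basis_span b (G n) x.
    elim=> [|n IH] x Jx.
      by apply: H1; apply: span_gen.
    case: (pselect (J n x)) => Jnx; first by apply: Gspan_S; apply: IH.
    have [eps [k [g [heps hg Er]]]] := H3 n.+1 isT x Jx Jnx.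
    rewrite Er; apply: spanD; last exact: Gspan_S.
    apply: spanZ; apply: span_gen; exists (eta x) => //.
    exact: ((H2 n.+1 isT).1 x Jx Jnx).1.
  have C : forall N (s : seq (R * M)), (forall p, p \in s -> J N p.2) ->
      basis_span b (G 0%N) (lc s) -> rspan (J 0%N) (lc s).
    elim=> [|N IH] s Js Y0; first exact: lc_span.
    set top := [seq p <- s | ~~ `[< J N p.2 >]].
    set rest := [seq p <- s | `[< J N p.2 >]].
    have Es : lc s = lc rest + lc top.
      by rewrite /lc (bigID (fun p => `[< J N p.2 >])) /= !big_filter.
    have Jrest : forall p, p \in rest -> J N p.2.
      by move=> p; rewrite mem_filter => /andP [/asboolP].
    have Jtop : forall p, p \in top -> J N.+1 p.2 /\ ~ J N p.2.
      move=> p; rewrite mem_filter => /andP [/asboolPn h ps]; split => //; exact: Js.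
    suff top0 : lc top = 0.
      have E : lc s = lc rest by rewrite Es top0 addr0.
      rewrite E; apply: IH => //; by rewrite -E.
    have [f Hf] : {f : M -> R * M & forall r, J N.+1 r -> ~ J N r ->
        (f r).1 \is a GRing.unit /\ basis_span b (G N) (f r).2 /\
        r = (f r).1 *: b (eta r) + (f r).2}.
      apply: (@boolp.choice M (R * M) (fun r ug => J N.+1 r -> ~ J N r ->
        ug.1 \is a GRing.unit /\ basis_span b (G N) ug.2 /\ r = ug.1 *: b (eta r) + ug.2)).
      move=> r; case: (pselect (J N.+1 r /\ ~ J N r)) => [[Jr nJr]|nh].
        have [eps [k [g [heps hg Er]]]] := H3 N.+1 isT r Jr nJr.
        by exists (eps * A ^ k, g) => _ _; split; [exact: unitu | split].
      by exists (0, 0) => Jr nJr; case: nh.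
    pose w := [seq (p.1 * (f p.2).1, eta p.2 : {classic T}) | p <- top].
    have Bw : \sum_(q <- w) q.1 *: b q.2 = lc top - lc [seq (p.1, (f p.2).2) | p <- top].
      rewrite /lc !big_map -sumrB; apply: eq_big_seq => p ptop /=.
      have [J1 nJ] := Jtop p ptop; have [_ [_ Ep]] := Hf _ J1 nJ.
      move: Ep; set ug := f p.2 => Ep.
      by rewrite {2}Ep scalerDr scalerA -addrA subrr addr0.
    have spanw : basis_span b (G N) (\sum_(q <- w) q.1 *: b q.2).
      rewrite Bw; apply: spanB.
        have -> : lc top = lc s - lc rest by rewrite Es addrAC subrr add0r.
        apply: spanB; first exact: G0span.
        apply: (span_mono (J N) _ (Jlev N)); exact: lc_span.
      apply: (span_mono (basis_span b (G N)) _ (fun x h => h)).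
      apply: lc_span => q /mapP [p ptop ->] /=.
      by have [J1 nJ] := Jtop p ptop; case: (Hf _ J1 nJ) => _ [].
    have coef0 := @KL R M {classic T} b (G N) w bas.
    have nPw : forall q, q \in w -> ~ G N q.2.
      move=> q /mapP [p ptop ->] /=; have [J1 nJ] := Jtop p ptop.
      exact: ((H2 N.+1 isT).1 _ J1 nJ).2.
    have {}coef0 := coef0 nPw spanw.
    have top_r : forall r, r \in map snd top -> \sum_(p <- top | p.2 == r) p.1 = 0.
      move=> r /mapP [p0 p0top ->].
      have [J1 nJ] := Jtop p0 p0top; have [ur _] := Hf _ J1 nJ.
      have := coef0 (eta p0.2); rewrite big_map /=.
      have -> : \sum_(p <- top | (eta p.2 : {classic T}) == eta p0.2) p.1 * (f p.2).1
          = (\sum_(p <- top | p.2 == p0.2) p.1) * (f p0.2).1.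
        rewrite mulr_suml big_seq_cond [RHS]big_seq_cond; apply: eq_big => p.
          case ptop: (p \in top) => //=. have [J1' nJ'] := Jtop p ptop.
          apply/eqP/eqP => e;
          first [exact: ((H2 N.+1 isT).2.1 _ _ J1' nJ' J1 nJ e) | by rewrite e].
        move=> /andP [ptop /eqP e]; have [J1' nJ'] := Jtop p ptop.
        by rewrite ((H2 N.+1 isT).2.1 _ _ J1' nJ' J1 nJ e).
      by move=> h; rewrite -(mulrK ur (\sum_(p <- top | p.2 == p0.2) p.1)) h mul0r.
    rewrite /lc (group_sum (fun x => x)); apply: big1_seq => r /andP [_ ru].
    by rewrite top_r ?scale0r // -mem_undup.
  have Jmono : forall n m x, (n <= m)%N -> J n x -> J m x.
    move=> n m x nm Jx; rewrite -(subnKC nm); elim: (m - n)%N => [|d IHd].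
      by rewrite addn0.
    by rewrite addnS; apply: HJ.
  move=> y Y0 /rspan_seq [s [Ss Ey]]; subst y.
  have [N HN] : exists N, forall p, p \in s -> J N p.2.
    clear Y0; elim: s Ss => [|p s IHs] Ss; first by exists 0%N.
    have [N1 HN1] := IHs (fun q qs => Ss q (@mem_behead _ (p :: s) q qs)).
    have [n Jn] := Ss p (mem_head _ _).
    exists (maxn N1 n) => q; rewrite in_cons => /orP [/eqP ->| qs].
      by apply: Jmono Jn; apply: leq_maxr.
    by apply: Jmono (HN1 q qs); apply: leq_maxl.
  exact: C N s HN Y0.
Qed.
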